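(* For each type $X$ in the list below, the determinant of the (finite) Cartan matrix $C_{\mathrm{fin}}$ of type $X$ equals $$\det C_{\mathrm{fin}}=\frac{8\,pqr}{ab},$$ where $(a,b,p,q,r)$ is given by: $\mathsf A_l$ ($l\ge0$): $(2,\,l+1,\,\tfrac12(l+1),\,\tfrac12(l+1),\,1)$; $\mathsf D_l$ ($l\ge4$): $(4,\,2l-4,\,l-2,\,2,\,2)$; $\mathsf E_6$: $(6,8,3,3,2)$; $\mathsf E_7$: $(8,12,4,3,2)$; $\mathsf E_8$: $(12,20,5,3,2)$; $\mathsf C_l$ ($l\ge2$): $(2,\,2l,\,l,\,1,\,1)$; $\mathsf B_l$ ($l\ge3$): $(4,\,2l-2,\,l-1,\,2,\,1)$; $\mathsf F_4$: $(6,8,3,2,1)$; $\mathsf G_2$: $(4,4,2,1,1)$.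
   Context: $C_{\mathrm{fin}}$ is the $l\times l$ Cartan matrix of the finite root system of type $X$ of rank $l$ (for $\mathsf A_0$ it is the empty matrix, with determinant $1$). *)

(* Defs.v *)
From HB Require Import structures.
From mathcomp Require Import all_boot all_order all_algebra.
Set Implicit Arguments. Unset Strict Implicit. Unset Printing Implicit Defensive.
Import Order.TTheory GRing.Theory Num.Theory.
Local Open Scope ring_scope.

Inductive cartan_type :=
| TA of nat | TB of nat | TC of nat | TD of nat
| TE6 | TE7 | TE8 | TF4 | TG2.

Definition rank (X : cartan_type) : nat :=
  match X with
  | TA l | TB l | TC l | TD l => l
  | TE6 => 6 | TE7 => 7 | TE8 => 8 | TF4 => 4 | TG2 => 2
  end.

Definition admissible (X : cartan_type) : bool :=
  match X with
  | TA l => true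
  | TB l => (3 <= l)%N
  | TC l => (2 <= l)%N
  | TD l => (4 <= l)%N
  | _ => true
  end.

Definition chain_adj (i j : nat) : bool := (i.+1 == j) || (j.+1 == i).

(* Dynkin diagram of E_n in Bourbaki numbering (0-based):
   0 - 2 - 3 - 4 - 5 - 6 - 7, with 1 attached to 3. *)
Definition E_adj (i j : nat) : bool :=
  let e a b := ((i == a) && (j == b)) || ((i == b) && (j == a)) in
  [|| e 0 2, e 2 3, e 3 4, e 4 5, e 5 6, e 6 7 | e 1 3]%N.

(* Off-diagonal Cartan entries a_ij = <alpha_i^vee, alpha_j> (Kac's
   convention), 0-based Bourbaki numbering of simple roots. *)
Definition cartan_offdiag (X : cartan_type) (i j : nat) : int :=
  match X with
  | TA l => if chain_adj i j then -1 else 0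
  | TB l => if (i == l.-1) && (j == l.-2) then -2
            else if chain_adj i j then -1 else 0
  | TC l => if (i == l.-2) && (j == l.-1) then -2
            else if chain_adj i j then -1 else 0
  | TD l => if (chain_adj i j && (i <= l.-2) && (j <= l.-2))%N
              || ((i == l.-1) && (j == (l - 3)%N)) || ((i == (l - 3)%N) && (j == l.-1))
            then -1 else 0
  | TE6 | TE7 | TE8 => if E_adj i j then -1 else 0
  | TF4 => if (i == 2) && (j == 1) then -2
           else if chain_adj i j then -1 else 0
  | TG2 => if (i == 0) && (j == 1) then -3
           else if (i == 1) && (j == 0) then -1 else 0
  end.

Definition cartan_entry (X : cartan_type) (i j : nat) : int :=
  if i == j then 2 else cartan_offdiag X i j.

Definition cartan_fin (X : cartan_type) : 'M[int]_(rank X) :=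
  \matrix_(i, j) cartan_entry X i j.

Definition params (X : cartan_type) : rat * rat * rat * rat * rat :=
  match X with
  | TA l => (2, (l.+1)%:R, (l.+1)%:R / 2, (l.+1)%:R / 2, 1)
  | TD l => (4, 2 * l%:R - 4, l%:R - 2, 2, 2)
  | TE6 => (6, 8, 3, 3, 2)
  | TE7 => (8, 12, 4, 3, 2)
  | TE8 => (12, 20, 5, 3, 2)
  | TC l => (2, 2 * l%:R, l%:R, 1, 1)
  | TB l => (4, 2 * l%:R - 2, l%:R - 1, 2, 1)
  | TF4 => (6, 8, 3, 2, 1)
  | TG2 => (4, 4, 2, 1, 1)
  end.

(* Main.v *)
Require Import Defs.
From mathcomp Require Import all_boot all_order all_algebra.
From mathcomp Require Import zify ring lra.
Import GRing.Theory Num.Theory.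
Local Open Scope ring_scope.

Definition Dt (f : nat -> nat -> int) n := \det (\matrix_(i, j < n) f i j).

Lemma Dt_ext f g n : (forall i j, (i < n)%N -> (j < n)%N -> f i j = g i j) -> Dt f n = Dt g n.
Proof. move=> H; rewrite /Dt; congr (\det _); apply/matrixP => i j; rewrite !mxE; exact: H. Qed.

Lemma Dt0 f : Dt f 0 = 1.
Proof. exact: det_mx00. Qed.

Lemma Dt1 f : Dt f 1 = f 0%N 0%N.
Proof. by rewrite /Dt det_mx11 mxE. Qed.

Lemma Dt_row0 f n : Dt f n.+1 = \sum_(j < n.+1) f 0%N j * (-1)^+j * Dt (fun a b => f a.+1 (bump j b)) n.
Proof.
rewrite /Dt (expand_det_row _ ord0); apply: eq_bigr => j _.
rewrite mxE /cofactor add0n mulrA; congr (_ * _ * \det _).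
by apply/matrixP => a b; rewrite !mxE.
Qed.

Lemma Dt_rowN f n : Dt f n.+1 = \sum_(j < n.+1) f n j * (-1)^+(n + j) * Dt (fun a b => f a (bump j b)) n.
Proof.
rewrite /Dt (expand_det_row _ ord_max); apply: eq_bigr => j _.
rewrite mxE /cofactor mulrA; congr (_ * _ * \det _).
apply/matrixP => a b; rewrite !mxE /=; congr (f _ _).
by rewrite /bump leqNgt ltn_ord.
Qed.

Lemma Dt_tr f n : Dt f n = Dt (fun a b => f b a) n.
Proof.
rewrite /Dt -det_tr; congr (\det _); apply/matrixP => a b; by rewrite !mxE.
Qed.

Lemma Dt_front f n :
  (forall j, (j < n)%N -> f 0%N j.+2 = 0) -> (forall j, (j < n)%N -> f j.+2 0%N = 0) ->
  Dt f n.+2 = f 0%N 0%N * Dt (fun i j => f i.+1 j.+1) n.+1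
              - f 0%N 1%N * f 1%N 0%N * Dt (fun i j => f i.+2 j.+2) n.
Proof.
move=> H1 H2.
rewrite Dt_row0 2!big_ord_recl /= big1; last first.
  by move=> j _; rewrite /= H1 // !mul0r.
rewrite addr0 expr0 mulr1 expr1 mulrN1.
rewrite (@Dt_ext _ (fun i j => f i.+1 j.+1)); last by move=> i j _ _; rewrite /bump.
congr (_ + _).
rewrite Dt_tr Dt_row0 big_ord_recl /= big1; last first.
  by move=> j _; rewrite /= H2 // !mul0r.
rewrite addr0 expr0 mulr1 Dt_tr.
rewrite (@Dt_ext _ (fun i j => f i.+2 j.+2)); last by move=> i j _ _; rewrite /bump.
by rewrite /bump /= mulNr mulrA.
Qed.

Lemma Dt_end f n :
  (forall j, (j < n)%N -> f n.+1 j = 0) -> (forall j, (j < n)%N -> f j n.+1 = 0) ->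
  Dt f n.+2 = f n.+1 n.+1 * Dt f n.+1 - f n.+1 n * f n n.+1 * Dt f n.
Proof.
move=> H1 H2.
rewrite Dt_rowN 2!big_ord_recr /= big1; last first.
  by move=> j _; rewrite /= H1 // !mul0r.
rewrite add0r addrC.
rewrite (@Dt_ext _ f n.+1); last first.
  by move=> i j _ Hj; rewrite /bump leqNgt Hj.
have -> : (-1) ^+ (n.+1 + n.+1) = 1 :> int by rewrite -signr_odd addnn odd_double.
rewrite mulr1; congr (_ + _).
have bnn : bump n n = n.+1 by rewrite /bump leqnn.
rewrite Dt_tr Dt_rowN big_ord_recr /= big1; last first.
  by move=> j _; rewrite bnn H2 // !mul0r.
rewrite add0r bnn.
have -> : (-1) ^+ (n + n) = 1 :> int by rewrite -signr_odd addnn odd_double.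
rewrite Dt_tr (@Dt_ext _ f n); last first.
  by move=> i j Hi Hj; rewrite /bump leqNgt Hi leqNgt Hj.
rewrite addSn -signr_odd oddS addnn odd_double expr1.
by rewrite mulr1 mulrN1 mulNr mulrA.
Qed.
Ltac brute := rewrite /cartan_entry /cartan_offdiag /chain_adj /E_adj /=;
  repeat (first [case: eqP => ? | case: leqP => ?]; try (exfalso; lia)); simpl; try done; try lia.

Definition fA := cartan_entry (TA 0).

Lemma detA l : Dt fA l = l.+1%:Z.
Proof.
suff : Dt fA l = l.+1%:Z /\ Dt fA l.+1 = l.+2%:Z by case.
elim: l => [|l [IH1 IH2]].
  by rewrite Dt0 Dt1.
split => //.
rewrite Dt_end ?IH1 ?IH2; last 2 first.
- by move=> j Hj; rewrite /fA; brute.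
- by move=> j Hj; rewrite /fA; brute.
have -> : fA l.+1 l.+1 = 2 by rewrite /fA; brute.
have -> : fA l.+1 l = -1 by rewrite /fA; brute.
have -> : fA l l.+1 = -1 by rewrite /fA; brute.
lia.
Qed.

Definition fE := cartan_entry TE8.
Lemma DE3 : Dt fE 3 = 6.
Proof.
rewrite Dt_row0 !big_ord_recr big_ord0 /=.
rewrite !Dt_row0 !big_ord_recr !big_ord0 /= !Dt1.
by [].
Qed.
Lemma DE4 : Dt fE 4 = 5.
Proof.
rewrite Dt_row0 !big_ord_recr big_ord0 /=.
rewrite !Dt_row0 !big_ord_recr !big_ord0 /=.
rewrite !Dt_row0 !big_ord_recr !big_ord0 /= !Dt1.
by [].
Qed.
Lemma DE5 : Dt fE 5 = 4.
Proof. rewrite Dt_end ?DE3 ?DE4; first by rewrite /fE. all: by move=> j Hj; rewrite /fE; brute. Qed.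
Lemma DE6 : Dt fE 6 = 3.
Proof. rewrite Dt_end ?DE5 ?DE4; first by rewrite /fE. all: by move=> j Hj; rewrite /fE; brute. Qed.
Lemma DE7 : Dt fE 7 = 2.
Proof. rewrite Dt_end ?DE5 ?DE6; first by rewrite /fE. all: by move=> j Hj; rewrite /fE; brute. Qed.
Lemma DE8 : Dt fE 8 = 1.
Proof. rewrite Dt_end ?DE7 ?DE6; first by rewrite /fE. all: by move=> j Hj; rewrite /fE; brute. Qed.

Lemma DF4 : Dt (cartan_entry TF4) 4 = 1.
Proof.
do 3 (rewrite Dt_end; [|by move=> j Hj; brute|by move=> j Hj; brute]).
by rewrite Dt1 Dt0.
Qed.

Lemma DG2 : Dt (cartan_entry TG2) 2 = 1.
Proof. by rewrite Dt_end // Dt1 Dt0. Qed.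

Lemma detC n : Dt (cartan_entry (TC n.+2)) n.+2 = 2.
Proof.
rewrite Dt_end; last 2 first.
- by move=> j Hj; brute.
- by move=> j Hj; brute.
rewrite (@Dt_ext _ fA n.+1); last by move=> i j Hi Hj; rewrite /fA; brute.
rewrite (@Dt_ext _ fA n); last by move=> i j Hi Hj; rewrite /fA; brute.
rewrite !detA.
have -> : cartan_entry (TC n.+2) n.+1 n.+1 = 2 by brute.
have -> : cartan_entry (TC n.+2) n.+1 n = -1 by brute.
have -> : cartan_entry (TC n.+2) n n.+1 = -2 by brute.
lia.
Qed.

Lemma detB n : Dt (cartan_entry (TB n.+2)) n.+2 = 2.
Proof.
rewrite Dt_end; last 2 first.
- by move=> j Hj; brute.
- by move=> j Hj; brute.
rewrite (@Dt_ext _ fA n.+1); last by move=> i j Hi Hj; rewrite /fA; brute.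
rewrite (@Dt_ext _ fA n); last by move=> i j Hi Hj; rewrite /fA; brute.
rewrite !detA.
have -> : cartan_entry (TB n.+2) n.+1 n.+1 = 2 by brute.
have -> : cartan_entry (TB n.+2) n.+1 n = -2 by brute.
have -> : cartan_entry (TB n.+2) n n.+1 = -1 by brute.
lia.
Qed.

Lemma detD k : Dt (cartan_entry (TD k.+3)) k.+3 = 4 /\ Dt (cartan_entry (TD k.+4)) k.+4 = 4.
Proof.
elim: k => [|k [IH1 IH2]].
  split.
    rewrite Dt_row0 !big_ord_recr big_ord0 /=.
    rewrite !Dt_row0 !big_ord_recr !big_ord0 /= !Dt1.
    by [].
  rewrite Dt_row0 !big_ord_recr big_ord0 /=.
  rewrite !Dt_row0 !big_ord_recr !big_ord0 /=.
  rewrite !Dt_row0 !big_ord_recr !big_ord0 /= !Dt1.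
  by [].
split => //.
rewrite Dt_front; last 2 first.
- by move=> j Hj; brute.
- by move=> j Hj; brute.
rewrite (@Dt_ext _ (cartan_entry (TD k.+4)) k.+4); last by move=> i j Hi Hj; brute.
rewrite (@Dt_ext _ (cartan_entry (TD k.+3)) k.+3); last by move=> i j Hi Hj; brute.
rewrite IH1 IH2.
have -> : cartan_entry (TD k.+1.+4) 0 0 = 2 by brute.
have -> : cartan_entry (TD k.+1.+4) 0 1 = -1 by brute.
have -> : cartan_entry (TD k.+1.+4) 1 0 = -1 by brute.
lia.
Qed.

Ltac fin l := field; try done; apply/negP => /eqP; have := ler0n rat l; lra.

Theorem mainTheorem5 (X : cartan_type) :
  admissible X ->
  let: (a, b, p, q, r) := params X in
  ((\det (cartan_fin X))%:~R : rat) = 8 * p * q * r / (a * b).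
Proof.
case: X => [l|l|l|l| | | | |] /= adm.
- have -> : \det (cartan_fin (TA l)) = Dt fA l by [].
  rewrite detA pmulrn; fin l.
- have -> : \det (cartan_fin (TB l)) = Dt (cartan_entry (TB l)) l by [].
  case: l adm => [|[|[|l]]] // _; rewrite detB.
  have h := ler0n rat l; field; try done; apply/negP => /eqP; lra.
- have -> : \det (cartan_fin (TC l)) = Dt (cartan_entry (TC l)) l by [].
  case: l adm => [|[|l]] // _; rewrite detC.
  have h := ler0n rat l; field; try done; apply/negP => /eqP; lra.
- have -> : \det (cartan_fin (TD l)) = Dt (cartan_entry (TD l)) l by [].
  case: l adm => [|[|[|[|l]]]] // _; rewrite (proj2 (detD l)).
  have h := ler0n rat l; field; try done; apply/negP => /eqP; lra.
- have -> : \det (cartan_fin TE6) = Dt fE 6 by []. rewrite DE6; field; try done.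
- have -> : \det (cartan_fin TE7) = Dt fE 7 by []. rewrite DE7; field; try done.
- have -> : \det (cartan_fin TE8) = Dt fE 8 by []. rewrite DE8; field; try done.
- have -> : \det (cartan_fin TF4) = Dt (cartan_entry TF4) 4 by []. rewrite DF4; field; try done.
- have -> : \det (cartan_fin TG2) = Dt (cartan_entry TG2) 2 by []. rewrite DG2; field; try done.
Qed.
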